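(* Let $\Omega\subset H^2$ be a bounded open set, and let $f$ be a bounded function on $\Omega$ which is $C^\infty$ in $\Omega$, continuous on $\overline{\Omega}\setminus\{x=0\}$, satisfies $f_{xx}+f_{yy}+3x^{-1}f_x=0$ in $\Omega$, and satisfies $f=0$ on $\partial\Omega\setminus\{x=0\}$. Then $f\equiv 0$ on $\Omega$.
   Context: $H^2=\{(x,y)\in\mathbb{R}^2: x>0\}$ is the open right half-plane. *)

(* Defs.v *)
From Stdlib Require Import Reals Lra List.
Open Scope R_scope.

Definition pt := (R * R)%type.

Definition dist2 (p q : pt) : R :=
  sqrt ((fst p - fst q) ^ 2 + (snd p - snd q) ^ 2).

Definition H2 (p : pt) : Prop := 0 < fst p.

Definition subset2 (A B : pt -> Prop) : Prop := forall p, A p -> B p.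

Definition open2 (U : pt -> Prop) : Prop :=
  forall p, U p -> exists eps, 0 < eps /\ forall q, dist2 q p < eps -> U q.

Definition bounded_set2 (U : pt -> Prop) : Prop :=
  exists M, forall p, U p -> dist2 p (0, 0) <= M.

Definition closure2 (U : pt -> Prop) (p : pt) : Prop :=
  forall eps, 0 < eps -> exists q, U q /\ dist2 q p < eps.

Definition boundary2 (U : pt -> Prop) (p : pt) : Prop :=
  closure2 U p /\ closure2 (fun q => ~ U q) p.

Definition continuous_on2 (S : pt -> Prop) (g : pt -> R) : Prop :=
  forall p, S p -> forall eps, 0 < eps -> exists delta, 0 < delta /\
    forall q, S q -> dist2 q p < delta -> Rabs (g q - g p) < eps.

Definition partial_x_on (U : pt -> Prop) (f g : pt -> R) : Prop :=
  forall p, U p -> derivable_pt_lim (fun t => f (t, snd p)) (fst p) (g p).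
Definition partial_y_on (U : pt -> Prop) (f g : pt -> R) : Prop :=
  forall p, U p -> derivable_pt_lim (fun t => f (fst p, t)) (snd p) (g p).

(* C^infinity on U: all iterated partial derivatives (in every order of the
   directions; [false] = d/dx, [true] = d/dy, head of the list = last
   derivative taken) exist on U and are continuous on U. *)
Definition Cinf_on (U : pt -> Prop) (f : pt -> R) : Prop :=
  exists D : list bool -> pt -> R,
    D nil = f /\
    forall l, continuous_on2 U (D l) /\
              partial_x_on U (D l) (D (false :: l)) /\
              partial_y_on U (D l) (D (true :: l)).

(* Main.v *)
Require Import Defs.
From Stdlib Require Import Reals Lra Classical.
Open Scope R_scope.

Lemma compact1 (G : (R -> Prop) -> Prop) a b :
 (forall I J : R -> Prop, (forall t, I t -> J t) -> G J -> G I) ->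
 (forall I J, G I -> G J -> G (fun t => I t \/ J t)) ->
 (forall t, a <= t <= b -> exists rho, 0 < rho /\ G (fun s => t - rho < s < t + rho)) ->
 a <= b -> G (fun s => a <= s <= b).
Proof.
  intros Hmono Hun Hloc Hab.
  set (E := fun t => a <= t <= b /\ G (fun s => a <= s <= t)).
  assert (HEa : E a).
  { split; [lra|]. destruct (Hloc a ltac:(lra)) as [rho [Hr HG]].
    eapply Hmono; [|exact HG]. intros s Hs; simpl in *; lra. }
  destruct (completeness E) as [T [HT1 HT2]].
  { exists b. intros t [Ht _]. lra. }
  { exists a; auto. }
  assert (HaT : a <= T) by (apply HT1; auto).
  assert (HTb : T <= b) by (apply HT2; intros t [Ht _]; lra).
  destruct (Hloc T ltac:(lra)) as [rho [Hr HG]].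
  destruct (classic (exists t, E t /\ T - rho < t)) as [[t [[Ht1 Ht2] Ht3]]|Hno].
  2:{ exfalso. assert (T <= T - rho); [|lra]. apply HT2. intros t Et.
      destruct (Rle_or_lt t (T - rho)); auto. exfalso; apply Hno; eauto. }
  assert (Ht4 : t <= T) by (apply HT1; split; auto).
  pose proof (Hun _ _ Ht2 HG) as HU.
  set (m := Rmin (T + rho/2) b).
  assert (Hm1 : m <= T + rho/2) by apply Rmin_l.
  assert (Hm2 : m <= b) by apply Rmin_r.
  assert (Hm3 : m = T + rho/2 \/ m = b).
  { unfold m, Rmin. destruct (Rle_dec (T + rho/2) b); auto. }
  assert (Em : E m).
  { split; [destruct Hm3; lra|].
    eapply Hmono; [|exact HU]. intros s Hs; simpl in *.
    destruct (Rle_or_lt s t); [left;lra|right;lra]. }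
  assert (m <= T) by (apply HT1; auto).
  assert (m = b) by (destruct Hm3; lra).
  eapply Hmono; [|exact HU]. intros s Hs; simpl in *.
  destruct (Rle_or_lt s t); [left;lra|right;lra].
Qed.

Lemma dist_small (p q : pt) rho : Rabs (fst p - fst q) < rho -> Rabs (snd p - snd q) < rho ->
  dist2 p q < 2 * rho.
Proof.
  intros H1 H2. unfold dist2.
  assert (0 <= rho) by (pose proof (Rabs_pos (fst p - fst q)); lra).
  rewrite <- (sqrt_Rsqr (2 * rho)) by lra.
  apply sqrt_lt_1_alt. split.
  - pose proof (pow2_ge_0 (fst p - fst q)); pose proof (pow2_ge_0 (snd p - snd q)); lra.
  - apply Rabs_def2 in H1; apply Rabs_def2 in H2. unfold Rsqr. nra.
Qed.

Lemma compact2 (B : (pt -> Prop) -> Prop) A :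
 (forall I J : pt -> Prop, (forall t, I t -> J t) -> B J -> B I) ->
 (forall I J, B I -> B J -> B (fun t => I t \/ J t)) ->
 (forall q, exists r, 0 < r /\ B (fun p => dist2 p q < r)) -> 0 <= A ->
 B (fun p => -A <= fst p <= A /\ -A <= snd p <= A).
Proof.
  intros Hmono Hun Hloc HA.
  assert (Hstrip : forall x0, exists rho, 0 < rho /\
     B (fun p => x0 - rho < fst p < x0 + rho /\ -A <= snd p <= A)).
  { intros x0.
    apply (compact1 (fun I => exists rho, 0 < rho /\
              B (fun p => x0 - rho < fst p < x0 + rho /\ I (snd p))) (-A) A); try lra.
    - intros I J HIJ [rho [Hr HB]]. exists rho; split; auto.
      eapply Hmono; [|exact HB]. intros p [Hp1 Hp2]; split; auto.
    - intros I J [r1 [Hr1 HB1]] [r2 [Hr2 HB2]]. exists (Rmin r1 r2).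
      pose proof (Rmin_l r1 r2); pose proof (Rmin_r r1 r2).
      split; [apply Rmin_pos; auto|].
      eapply Hmono; [|exact (Hun _ _ HB1 HB2)]. simpl.
      intros p [Hp1 [Hp2|Hp2]]; [left|right]; split; auto; lra.
    - intros t Ht. destruct (Hloc (x0, t)) as [r [Hr HB]].
      exists (r/2). split; [lra|]. exists (r/2). split; [lra|].
      eapply Hmono; [|exact HB]. simpl. intros p [Hp1 Hp2].
      replace r with (2 * (r/2)) by field.
      apply dist_small; simpl; apply Rabs_def1; lra. }
  apply (compact1 (fun I => B (fun p => I (fst p) /\ -A <= snd p <= A)) (-A) A); try lra.
  - intros I J HIJ HB. eapply Hmono; [|exact HB]. intros p [Hp1 Hp2]; split; auto.
  - intros I J HB1 HB2.
    eapply Hmono; [|exact (Hun _ _ HB1 HB2)]. simpl.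
    intros p [[Hp1|Hp1] Hp2]; [left|right]; split; auto.
  - intros t Ht. destruct (Hstrip t) as [rho [Hr HB]]. exists rho; split; auto.
Qed.

Lemma fst_le_dist p q : Rabs (fst p - fst q) <= dist2 p q.
Proof.
  unfold dist2. rewrite <- sqrt_Rsqr_abs. apply sqrt_le_1_alt. unfold Rsqr.
  pose proof (pow2_ge_0 (snd p - snd q)). simpl. lra.
Qed.

Lemma snd_le_dist p q : Rabs (snd p - snd q) <= dist2 p q.
Proof.
  unfold dist2. rewrite <- sqrt_Rsqr_abs. apply sqrt_le_1_alt. unfold Rsqr.
  pose proof (pow2_ge_0 (fst p - fst q)). simpl. lra.
Qed.

Lemma dist_self p : dist2 p p = 0.
Proof. unfold dist2. replace ((fst p - fst p) ^ 2 + (snd p - snd p) ^ 2) with 0 by ring. apply sqrt_0. Qed.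

Lemma dist_line_x t y0 x0 : dist2 (t, y0) (x0, y0) = Rabs (t - x0).
Proof. unfold dist2; simpl. rewrite <- sqrt_Rsqr_abs. f_equal. unfold Rsqr. ring. Qed.

Lemma dist_line_y s y0 x0 : dist2 (x0, s) (x0, y0) = Rabs (s - y0).
Proof. unfold dist2; simpl. rewrite <- sqrt_Rsqr_abs. f_equal. unfold Rsqr. ring. Qed.

Lemma cont_R (g : R -> R) x : continuity_pt g x -> forall e, 0 < e ->
  exists d, 0 < d /\ forall y, Rabs (y - x) < d -> Rabs (g y - g x) < e.
Proof.
  intros Hc e He. destruct (Hc e He) as [d [Hd H]]. exists d; split; auto.
  intros y Hy. destruct (Req_dec y x) as [->|Hne].
  - replace (g x - g x) with 0 by ring. rewrite Rabs_R0; auto.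
  - apply (H y). split; [split; [exact I| auto]|]. exact Hy.
Qed.

Lemma lt_div K a e : 0 < a -> K * a < e -> K < e / a.
Proof.
  intros Ha H. apply (Rmult_lt_reg_r a); auto. unfold Rdiv. rewrite Rmult_assoc, Rinv_l; lra.
Qed.

Lemma dl_ext (f g : R -> R) x l l' : (forall t, f t = g t) -> l = l' ->
  derivable_pt_lim f x l -> derivable_pt_lim g x l'.
Proof.
  intros Hfg <- H eps Heps. destruct (H eps Heps) as [d Hd]. exists d.
  intros h Hh Hh'. rewrite <- !Hfg. apply Hd; auto.
Qed.

Lemma dl_cpow (c t : R) (n : nat) : t <> 0 ->
  derivable_pt_lim (fun s => c / s ^ (S n)) t (- (INR (S n)) * c / t ^ (S (S n))).
Proof.
  intros Ht.
  apply (dl_ext (fct_cte c / (fun y => y ^ (S n)))%F _ _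
    ((0 * (t ^ S n) - INR (S n) * t ^ Init.Nat.pred (S n) * c) / (t ^ S n)²)).
  - intros; reflexivity.
  - simpl pred. unfold Rsqr. simpl. field. split; auto. apply pow_nonzero; auto.
  - apply derivable_pt_lim_div.
    + apply derivable_pt_lim_const.
    + apply derivable_pt_lim_pow.
    + apply pow_nonzero; auto.
Qed.

Lemma first_deriv_max (h : R -> R) c r l : 0 < r ->
  (forall t, c - r < t < c + r -> h t <= h c) ->
  derivable_pt_lim h c l -> l = 0.
Proof.
  intros Hr Hmax Hd.
  destruct (Rtotal_order l 0) as [Hl|[Hl|Hl]]; auto; exfalso.
  - destruct (Hd (- l) ltac:(lra)) as [d Hdd].
    set (s := - Rmin (d/2) (r/2)).
    assert (Hs1 : 0 < Rmin (d/2) (r/2)) by (apply Rmin_pos; destruct d; simpl; lra).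
    assert (Hs2 : Rmin (d/2) (r/2) <= d/2) by apply Rmin_l.
    assert (Hs3 : Rmin (d/2) (r/2) <= r/2) by apply Rmin_r.
    destruct d as [d dpos]; simpl in *.
    specialize (Hdd s ltac:(unfold s; lra)).
    assert (Habs : Rabs s < d) by (unfold s; rewrite Rabs_Ropp, Rabs_pos_eq; lra).
    specialize (Hdd Habs).
    specialize (Hmax (c + s) ltac:(unfold s; lra)).
    apply Rabs_def2 in Hdd. destruct Hdd as [H1 H2].
    assert (Hq : (h (c + s) - h c) / s >= 0).
    { unfold Rdiv. replace ((h (c + s) - h c) * / s) with ((h c - h (c+s)) * / (- s))
        by (field; unfold s; lra).
      apply Rle_ge, Rmult_le_pos; [lra|]. left; apply Rinv_0_lt_compat; unfold s; lra. }
    lra.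
  - destruct (Hd l ltac:(lra)) as [d Hdd].
    set (s := Rmin (d/2) (r/2)).
    assert (Hs1 : 0 < s) by (apply Rmin_pos; destruct d; simpl; lra).
    assert (Hs2 : s <= d/2) by apply Rmin_l.
    assert (Hs3 : s <= r/2) by apply Rmin_r.
    destruct d as [d dpos]; simpl in *.
    specialize (Hdd s ltac:(lra)).
    assert (Habs : Rabs s < d) by (rewrite Rabs_pos_eq; lra).
    specialize (Hdd Habs).
    specialize (Hmax (c + s) ltac:(lra)).
    apply Rabs_def2 in Hdd. destruct Hdd as [H1 H2].
    assert (Hq : (h (c + s) - h c) / s <= 0).
    { unfold Rdiv. replace ((h (c + s) - h c) * / s) with (- ((h c - h (c+s)) * / s))
        by (field; lra).
      assert (0 <= (h c - h (c+s)) * / s); [|lra].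
      apply Rmult_le_pos; [lra|]. left; apply Rinv_0_lt_compat; lra. }
    lra.
Qed.

Lemma second_deriv_max (h h' : R -> R) c r L : 0 < r ->
  (forall t, c - r < t < c + r -> h t <= h c) ->
  (forall t, c - r < t < c + r -> derivable_pt_lim h t (h' t)) ->
  derivable_pt_lim h' c L -> h' c = 0 /\ L <= 0.
Proof.
  intros Hr Hmax Hd Hd2.
  assert (H0 : h' c = 0).
  { apply (first_deriv_max h c r); auto. apply Hd; lra. }
  split; auto.
  destruct (Rle_or_lt L 0) as [HL|HL]; auto; exfalso.
  destruct (Hd2 L HL) as [d Hdd].
  set (s := Rmin (d/2) (r/2)).
  assert (Hs1 : 0 < s) by (apply Rmin_pos; destruct d; simpl; lra).
  assert (Hs2 : s <= d/2) by apply Rmin_l.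
  assert (Hs3 : s <= r/2) by apply Rmin_r.
  destruct d as [d dpos]; simpl in *.
  assert (Hpos : forall t, 0 < t <= s -> h' (c + t) > 0).
  { intros t Ht. specialize (Hdd t ltac:(lra)).
    assert (Habs : Rabs t < d) by (rewrite Rabs_pos_eq; lra).
    specialize (Hdd Habs). rewrite H0 in Hdd. apply Rabs_def2 in Hdd.
    destruct Hdd as [H1 H2].
    assert (Hq : 0 < (h' (c + t) - 0) / t) by lra.
    unfold Rdiv in Hq. rewrite Rminus_0_r in Hq.
    destruct (Rle_or_lt (h' (c+t)) 0) as [Hn|Hn]; auto.
    exfalso. assert (0 <= - h' (c+t) * / t).
    { apply Rmult_le_pos; [lra|]. left; apply Rinv_0_lt_compat; lra. }
    lra. }
  destruct (MVT_cor2 h h' c (c + s) ltac:(lra)) as [xi [Hxi1 Hxi2]].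
  { intros t Ht. apply Hd. lra. }
  specialize (Hpos (xi - c) ltac:(lra)).
  replace (c + (xi - c)) with xi in Hpos by ring.
  specialize (Hmax (c + s) ltac:(lra)).
  assert (0 < h' xi * (c + s - c)) by (apply Rmult_lt_0_compat; lra).
  lra.
Qed.

Lemma Rabs_le_inv a b : Rabs a <= b -> -b <= a <= b.
Proof. unfold Rabs; destruct (Rcase_abs a); lra. Qed.

Section CoreSec.
Lemma core (Omega : pt -> Prop) (f fx fy fxx fyy : pt -> R) (A M : R) :
 open2 Omega -> (forall p, Omega p -> Rabs (fst p) <= A /\ Rabs (snd p) <= A) ->
 subset2 Omega H2 ->
 (forall p, Omega p -> Rabs (f p) <= M) ->
 continuous_on2 (fun p => closure2 Omega p /\ fst p <> 0) f ->
 partial_x_on Omega f fx -> partial_y_on Omega f fy ->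
 partial_x_on Omega fx fxx -> partial_y_on Omega fy fyy ->
 (forall p, Omega p -> fxx p + fyy p + 3 / fst p * fx p = 0) ->
 (forall p, boundary2 Omega p -> fst p <> 0 -> f p = 0) ->
 forall p, Omega p -> f p <= 0.
Proof.
  intros Hopen HA HH HM Hcont Hfx Hfy Hfxx Hfyy Hpde Hbd p0 Hp0.
  destruct (Rle_or_lt (f p0) 0) as [Hle|Hpos]; auto. exfalso.
  set (x0 := fst p0).
  assert (Hx0 : 0 < x0) by (apply HH; auto).
  assert (HAx0 : x0 <= A) by (destruct (HA p0 Hp0) as [H1 _]; fold x0 in H1; rewrite Rabs_pos_eq in H1; lra).
  assert (HMp : f p0 <= M) by (pose proof (HM p0 Hp0); apply Rabs_le_inv in H; lra).
  set (eps := f p0 * x0 ^ 2 / 2).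
  assert (Heps : 0 < eps) by (unfold eps; pose proof (pow_lt x0 2 Hx0); nra).
  set (delta := eps / (4 * A ^ 4)).
  assert (HA4 : 0 < A ^ 4) by (apply pow_lt; lra).
  assert (Hdelta : 0 < delta) by (unfold delta; apply Rdiv_lt_0_compat; lra).
  set (u := fun p : pt => f p - eps / (fst p) ^ 2 + delta * (snd p) ^ 2).
  assert (Hfacts : forall p, Omega p -> 0 < fst p /\ fst p <= A /\ (snd p) ^ 2 <= A ^ 2).
  { intros p Hp. assert (Hx : 0 < fst p) by (apply HH; auto).
    destruct (HA p Hp) as [H1 H2]. rewrite Rabs_pos_eq in H1 by lra.
    repeat split; auto. apply Rabs_le_inv in H2. nra. }
  assert (Hub : forall p, Omega p -> u p <= M + delta * A ^ 2).
  { intros p Hp. destruct (Hfacts p Hp) as [H1 [H2 H3]]. unfold u.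
    pose proof (HM p Hp) as H4. apply Rabs_le_inv in H4.
    assert (0 <= eps / fst p ^ 2) by (unfold Rdiv; apply Rmult_le_pos; [lra| left; apply Rinv_0_lt_compat, pow_lt; lra]).
    nra. }
  assert (Hup0 : f p0 / 2 <= u p0).
  { unfold u. fold x0. unfold eps.
    replace (f p0 * x0 ^ 2 / 2 / x0 ^ 2) with (f p0 / 2) by (field; lra).
    pose proof (pow2_ge_0 (snd p0)). nra. }
  set (E := fun v => exists p, Omega p /\ v = u p).
  assert (HEb : bound E).
  { exists (M + delta * A ^ 2). intros v [p [Hp ->]]. auto. }
  assert (HEn : exists v, E v) by (exists (u p0); exists p0; auto).
  destruct (completeness E HEb HEn) as [S [HS1 HS2]].
  assert (HuS : forall p, Omega p -> u p <= S) by (intros p Hp; apply HS1; exists p; auto).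
  assert (HSpos : 0 < S) by (pose proof (HuS p0 Hp0); lra).
  set (B := fun X : pt -> Prop => exists eta, 0 < eta /\ forall p, X p -> Omega p -> u p <= S - eta).
  assert (HAnn : 0 <= A) by lra.
  assert (Hsq : B (fun p => -A <= fst p <= A /\ -A <= snd p <= A)).
  { apply compact2; auto.
    - intros I J HIJ [eta [He HJ]]. exists eta; split; auto.
    - intros I J [e1 [He1 HI]] [e2 [He2 HJ]]. exists (Rmin e1 e2).
      pose proof (Rmin_l e1 e2); pose proof (Rmin_r e1 e2).
      split; [apply Rmin_pos; auto|].
      intros p [Hp|Hp] Hom; [specialize (HI p Hp Hom)|specialize (HJ p Hp Hom)]; lra.
    - intros q.
      destruct (classic (closure2 Omega q)) as [Hc|Hnc].
      2:{ unfold closure2 in Hnc. apply not_all_ex_not in Hnc. destruct Hnc as [e0 He0].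
          apply imply_to_and in He0. destruct He0 as [He0 Hno].
          exists e0. split; auto. exists 1. split; [lra|]. intros p Hp Hom.
          exfalso. apply Hno. exists p; auto. }
      assert (Hself : forall p e, 0 < e -> dist2 p p < e) by (intros; rewrite dist_self; auto).
      destruct (classic (Omega q)) as [Hq|Hnq].
      + destruct (Hfacts q Hq) as [Hxq _].
        destruct (Rle_lt_or_eq_dec _ _ (HuS q Hq)) as [Hlt|Heq].
        * set (e := (S - u q) / 6).
          assert (He : 0 < e) by (unfold e; lra).
          assert (Hxq' : fst q <> 0) by lra.
          destruct (Hcont q (conj Hc Hxq') e He) as [d1 [Hd1 Hc1]].
          destruct (cont_R (fun t => eps / t ^ 2) (fst q)
             (derivable_continuous_pt _ _ (exist _ _ (dl_cpow eps (fst q) 1 Hxq'))) e He)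
             as [d2 [Hd2 Hc2]].
          destruct (cont_R (fun y => delta * y ^ 2) (snd q)
             (derivable_continuous_pt _ _ (exist _ _ (derivable_pt_lim_scal (fun y => y ^ 2) delta (snd q) _ (derivable_pt_lim_pow (snd q) 2)))) e He)
             as [d3 [Hd3 Hc3]].
          exists (Rmin d1 (Rmin d2 d3)).
          pose proof (Rmin_l d1 (Rmin d2 d3)); pose proof (Rmin_r d1 (Rmin d2 d3)).
          pose proof (Rmin_l d2 d3); pose proof (Rmin_r d2 d3).
          split; [repeat apply Rmin_pos; auto|].
          exists (3 * e). split; [lra|]. intros p Hp Hom.
          destruct (Hfacts p Hom) as [Hxp _].
          assert (Hps : closure2 Omega p /\ fst p <> 0).
          { split; [intros e' He'; exists p; auto|lra]. }
          specialize (Hc1 p Hps ltac:(lra)).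
          pose proof (fst_le_dist p q); pose proof (snd_le_dist p q).
          specialize (Hc2 (fst p) ltac:(lra)). specialize (Hc3 (snd p) ltac:(lra)).
          apply Rabs_def2 in Hc1, Hc2, Hc3.
          cbv beta in Hc2, Hc3.
          assert (u p - u q < 3 * e) by (unfold u; lra).
          unfold e in *. lra.
        * exfalso. destruct (Hopen q Hq) as [r0 [Hr0 Hball]].
          pose proof (Hpde q Hq) as Hpq.
          destruct q as [xq yq]. simpl in Hxq, Hpq.
          assert (Hlx : forall t, xq - r0 < t < xq + r0 -> Omega (t, yq)).
          { intros t Ht. apply Hball. rewrite dist_line_x. apply Rabs_def1; lra. }
          assert (Hly : forall s, yq - r0 < s < yq + r0 -> Omega (xq, s)).
          { intros s Hs. apply Hball. rewrite dist_line_y. apply Rabs_def1; lra. }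
          destruct (second_deriv_max (fun t => f (t, yq) - eps / t ^ 2 + delta * yq ^ 2)
             (fun t => fx (t, yq) - (- INR 2 * eps / t ^ 3)) xq r0
             (fxx (xq, yq) - (- INR 3 * (- INR 2 * eps) / xq ^ 4)) Hr0) as [Hx1 Hx2].
          { intros t Ht. change (u (t, yq) <= u (xq, yq)). rewrite Heq. apply HuS; auto. }
          { intros t Ht. pose proof (Hlx t Ht) as Hom. destruct (Hfacts _ Hom) as [Ht0 _].
            simpl in Ht0.
            apply (dl_ext ((fun s => f (s, yq)) - (fun s => (eps / s ^ 2)%R) + fct_cte (delta * yq ^ 2)%R)%F _ _
              (fx (t, yq) - (- INR 2 * eps / t ^ 3) + 0)).
            - intros; reflexivity.
            - ring.
            - apply derivable_pt_lim_plus; [apply derivable_pt_lim_minus|apply derivable_pt_lim_const].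
              + apply (Hfx (t, yq) Hom).
              + apply (dl_cpow eps t 1); lra. }
          { apply (dl_ext ((fun s => fx (s, yq)) - (fun s => ((- INR 2 * eps) / s ^ 3)%R))%F _ _
              (fxx (xq, yq) - (- INR 3 * (- INR 2 * eps) / xq ^ 4))).
            - intros; reflexivity.
            - reflexivity.
            - apply derivable_pt_lim_minus.
              + apply (Hfxx (xq, yq) Hq).
              + apply (dl_cpow (- INR 2 * eps) xq 2); lra. }
          destruct (second_deriv_max (fun s => f (xq, s) - eps / xq ^ 2 + delta * s ^ 2)
             (fun s => fy (xq, s) + 2 * delta * s) yq r0
             (fyy (xq, yq) + 2 * delta) Hr0) as [Hy1 Hy2].
          { intros s Hs. change (u (xq, s) <= u (xq, yq)). rewrite Heq. apply HuS; auto. }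
          { intros s Hs. pose proof (Hly s Hs) as Hom.
            apply (dl_ext ((fun s => f (xq, s)) - fct_cte (eps / xq ^ 2)%R + mult_real_fct delta (fun s => (s ^ 2)%R))%F _ _
              (fy (xq, s) - 0 + delta * (INR 2 * s ^ Init.Nat.pred 2))).
            - intros; reflexivity.
            - simpl. ring.
            - apply derivable_pt_lim_plus; [apply derivable_pt_lim_minus|apply derivable_pt_lim_scal].
              + apply (Hfy (xq, s) Hom).
              + apply derivable_pt_lim_const.
              + apply derivable_pt_lim_pow. }
          { apply (dl_ext ((fun s => fy (xq, s)) + mult_real_fct (2 * delta)%R id)%F _ _
              (fyy (xq, yq) + 2 * delta * 1)).
            - intros; reflexivity.
            - ring.
            - apply derivable_pt_lim_plus.
              + apply (Hfyy (xq, yq) Hq).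
              + apply derivable_pt_lim_scal, derivable_pt_lim_id. }
          cbv beta in Hx1, Hx2, Hy1, Hy2.
          replace (INR 2) with 2 in * by (simpl; ring).
          replace (INR 3) with 3 in * by (simpl; ring).
          assert (Hfxv : fx (xq, yq) = - 2 * eps / xq ^ 3) by lra.
          assert (H3 : 3 / xq * fx (xq, yq) = - (6 * eps / xq ^ 4)) by (rewrite Hfxv; field; lra).
          assert (H4 : - 3 * (- 2 * eps) / xq ^ 4 = 6 * eps / xq ^ 4) by (field; lra).
          lra.
      + destruct (Req_dec (fst q) 0) as [Hx0q|Hxq].
        * set (K := M + delta * A ^ 2 + 1).
          assert (HK : 0 < K) by (unfold K; pose proof (pow2_ge_0 A); nra).
          assert (HeK : 0 < eps / K) by (apply Rdiv_lt_0_compat; lra).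
          exists (Rmin 1 (eps / K)).
          pose proof (Rmin_l 1 (eps / K)); pose proof (Rmin_r 1 (eps / K)).
          split; [apply Rmin_pos; lra|].
          exists S. split; auto. intros p Hp Hom.
          destruct (Hfacts p Hom) as [Hxp [_ Hyp]].
          pose proof (fst_le_dist p q) as Hfd. rewrite Hx0q, Rminus_0_r, Rabs_pos_eq in Hfd by lra.
          assert (HKe : K * (eps / K) = eps) by (field; lra).
          assert (Hxx : fst p ^ 2 < fst p) by (simpl; nra).
          assert (HKx : K * fst p < K * (eps / K)) by (apply Rmult_lt_compat_l; lra).
          assert (Hx2 : K * fst p ^ 2 < eps) by nra.
          pose proof (lt_div K (fst p ^ 2) eps ltac:(apply pow_lt; lra) Hx2).
          pose proof (HM p Hom) as HMp'. apply Rabs_le_inv in HMp'.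
          assert (delta * snd p ^ 2 <= delta * A ^ 2) by (apply Rmult_le_compat_l; lra).
          unfold u; unfold K in *; lra.
        * assert (Hbq : boundary2 Omega q).
          { split; auto. intros e He. exists q. split; auto. }
          pose proof (Hbd q Hbq Hxq) as Hf0.
          assert (HA2 : 0 < A ^ 2) by (apply pow_lt; lra).
          set (w := eps / A ^ 2).
          assert (Hw : 0 < w) by (apply Rdiv_lt_0_compat; lra).
          destruct (Hcont q (conj Hc Hxq) (w / 4) ltac:(lra)) as [d [Hd Hdq]].
          exists d. split; auto. exists S. split; auto. intros p Hp Hom.
          destruct (Hfacts p Hom) as [Hxp [HxA Hyp]].
          assert (Hps : closure2 Omega p /\ fst p <> 0).
          { split; [intros e' He'; exists p; auto|lra]. }
          specialize (Hdq p Hps Hp). rewrite Hf0, Rminus_0_r in Hdq. apply Rabs_def2 in Hdq.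
          assert (Hw1 : w <= eps / fst p ^ 2).
          { unfold w, Rdiv. apply Rmult_le_compat_l; [lra|].
            apply Rinv_le_contravar; [apply pow_lt; lra|]. apply pow_incr; lra. }
          assert (Hw2 : delta * A ^ 2 = w / 4) by (unfold delta, w; field; lra).
          assert (delta * snd p ^ 2 <= delta * A ^ 2) by (apply Rmult_le_compat_l; lra).
          unfold u; lra.
  }
  destruct Hsq as [eta [Heta Hsq]].
  assert (S <= S - eta); [|lra].
  apply HS2. intros v [p [Hp ->]]. apply Hsq; auto.
  destruct (HA p Hp) as [H1 H2]. apply Rabs_le_inv in H1, H2. auto.
Qed.
End CoreSec.

Theorem proposition4p2 (Omega : pt -> Prop) (f : pt -> R) :
  open2 Omega ->
  bounded_set2 Omega ->
  subset2 Omega H2 ->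
  (exists M, forall p, Omega p -> Rabs (f p) <= M) ->
  Cinf_on Omega f ->
  continuous_on2 (fun p => closure2 Omega p /\ fst p <> 0) f ->
  (exists fx fy fxx fyy : pt -> R,
      partial_x_on Omega f fx /\ partial_y_on Omega f fy /\
      partial_x_on Omega fx fxx /\ partial_y_on Omega fy fyy /\
      forall p, Omega p -> fxx p + fyy p + 3 / fst p * fx p = 0) ->
  (forall p, boundary2 Omega p -> fst p <> 0 -> f p = 0) ->
  forall p, Omega p -> f p = 0.
Proof.
  intros Hopen [Mb HMb] HH [M HM] _ Hcont [fx [fy [fxx [fyy [Hfx [Hfy [Hfxx [Hfyy Hpde]]]]]]]] Hbd p Hp.
  assert (HA : forall p, Omega p -> Rabs (fst p) <= Mb /\ Rabs (snd p) <= Mb).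
  { intros q Hq. pose proof (HMb q Hq). pose proof (fst_le_dist q (0,0)).
    pose proof (snd_le_dist q (0,0)). simpl in *. rewrite !Rminus_0_r in *. split; lra. }
  assert (H1 : f p <= 0) by (eapply core; eauto).
  assert (H2 : (fun q => - f q) p <= 0).
  { apply (core Omega (fun q => - f q) (fun q => - fx q) (fun q => - fy q)
       (fun q => - fxx q) (fun q => - fyy q) Mb M); auto.
    - intros q Hq. rewrite Rabs_Ropp. auto.
    - intros q Hq e He. destruct (Hcont q Hq e He) as [d [Hd Hd']]. exists d; split; auto.
      intros q' Hq' Hdq. replace (- f q' - - f q) with (- (f q' - f q)) by ring.
      rewrite Rabs_Ropp; auto.
    - intros q Hq. apply (derivable_pt_lim_opp _ _ _ (Hfx q Hq)).
    - intros q Hq. apply (derivable_pt_lim_opp _ _ _ (Hfy q Hq)).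
    - intros q Hq. apply (derivable_pt_lim_opp _ _ _ (Hfxx q Hq)).
    - intros q Hq. apply (derivable_pt_lim_opp _ _ _ (Hfyy q Hq)).
    - intros q Hq. pose proof (Hpde q Hq).
      replace (- fxx q + - fyy q + 3 / fst q * - fx q) with (- (fxx q + fyy q + 3 / fst q * fx q)) by ring.
      lra.
    - intros q Hq Hx. rewrite (Hbd q Hq Hx). ring. }
  simpl in H2. lra.
Qed.
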